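(* Let $D$ be a Dirac operator for a finite complex spectral triple over $\mathcal A$, let $\xi:=\sum_{i\neq j}P_i\,dP_j\in\Omega^1(\mathcal A)$ and $\hat\xi:=\pi(\xi)$. Suppose $\hat\xi^{\,2}=\sum_i\pi(P_i)\hat\xi^{\,2}\pi(P_i)$. Then in $\Omega^2(\mathcal A)$ one has $\sum_iP_i\xi\xi P_i=\xi\xi$, $d\xi=2\xi\xi$, and for every $\omega\in\Omega^1(\mathcal A)$ $$d\omega=\xi\omega+\omega\xi .$$ Consequently the curvature $F(H):=dH+HH$ of the one-form $H=-2\xi$ vanishes in $\Omega^2(\mathcal A)$.
   Context: Let $\mathcal A=\bigoplus_{i=1}^k M_{n_i}(\mathbb C)$ ($n_i\ge 1$), with involution $a\mapsto a^*$ given by blockwise conjugate transpose. A finite complex spectral triple over $\mathcal A$ consists of: a finite-dimensional complex Hilbert space $\mathcal H$; a faithful $*$-representation $\pi:\mathcal A\to B(\mathcal H)$; an antilinear isometry $J$ of $\mathcal H$ with $J^2=1$ such that $\pi^0(a):=J\pi(a)^*J$ defines a representation of the opposite algebra $\mathcal A^0$ and $[\pi^0(a),\pi(b)]=0$ for all $a,b\in\mathcal A$; and a grading $\gamma\in B(\mathcal H)$ with $\gamma^*=\gamma$, $\gamma^2=1$, $J\gamma=\gamma J$, $\gamma\pi(a)=\pi(a)\gamma$ for all $a$, and $\gamma=\sum_m\pi(x_m)\pi^0(y_m)$ for finitely many $x_m,y_m\in\mathcal A$. Let $P_i\in\mathcal A$ be the element with the identity matrix in the $i$-th block and zeros elsewhere.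 A Dirac operator is a self-adjoint $D\in B(\mathcal H)$ with $DJ=JD$, $D\gamma=-\gamma D$ and $[[D,\pi(a)],\pi^0(b)]=0$ for all $a,b$. Let $\Omega_u\mathcal A$ be the universal differential graded algebra of $\mathcal A$; $\pi$ extends to it by $\pi(a_0\,da_1\cdots da_n)=\pi(a_0)[D,\pi(a_1)]\cdots[D,\pi(a_n)]$. The differential algebra of the spectral triple is $\Omega(\mathcal A)=\Omega_u\mathcal A/(\ker\pi+d\ker\pi)$, i.e. $\Omega^n(\mathcal A)=\Omega^n_u\mathcal A/(\Omega^n_u\mathcal A\cap(\ker\pi+d\ker\pi))$, with the induced product and differential $d$. *)

(* Defs.v *)
From HB Require Import structures.
From mathcomp Require Import all_boot all_algebra.
Set Implicit Arguments. Unset Strict Implicit. Unset Printing Implicit Defensive.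
Import GRing.Theory Num.Theory.
Local Open Scope ring_scope.

Section Mx.
Variable C : numClosedFieldType.

Definition conjmx m p (A : 'M[C]_(m, p)) : 'M[C]_(m, p) := map_mx (fun z => z^*) A.
Definition adjmx m p (A : 'M[C]_(m, p)) : 'M[C]_(p, m) := (conjmx A)^T.
Definition comm N (X Y : 'M[C]_N) : 'M[C]_N := X *m Y - Y *m X.

(* An antilinear map on H = C^N is x |-> Jm *m conj(x); Jop Jm is that map. *)
Definition Jop N (Jm : 'M[C]_N) (x : 'cV[C]_N) : 'cV[C]_N := Jm *m conjmx x.
(* the matrix of the (linear) operator  x |-> J (B (J x))  *)
Definition Jconj N (Jm : 'M[C]_N) (B : 'M[C]_N) : 'M[C]_N :=
  Jm *m conjmx B *m conjmx Jm.
End Mx.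

Section Alg.
Variables (C : numClosedFieldType) (k : nat) (n : 'I_k -> nat).

Definition alg := forall i : 'I_k, 'M[C]_(n i).
Definition aadd (a b : alg) : alg := fun i => a i + b i.
Definition aopp (a : alg) : alg := fun i => - a i.
Definition ascale (c : C) (a : alg) : alg := fun i => c *: a i.
Definition amul (a b : alg) : alg := fun i => a i *m b i.
Definition astar (a : alg) : alg := fun i => adjmx (a i).
Definition aone : alg := fun i => 1%:M.
Definition Pblk (j : 'I_k) : alg := fun i => if i == j then 1%:M else 0.
End Alg.

Definition pi0_of (C : numClosedFieldType) k (n : 'I_k -> nat) N
  (pi : alg C n -> 'M[C]_N) (Jm : 'M[C]_N) (a : alg C n) : 'M[C]_N :=
  Jconj Jm (adjmx (pi a)).

Record fin_spectral_triple (C : numClosedFieldType) k (n : 'I_k -> nat) := FST {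
  fst_N : nat;
  fst_pi : alg C n -> 'M[C]_fst_N;
  fst_J : 'M[C]_fst_N;
  fst_gamma : 'M[C]_fst_N;
  fst_pi_add : forall a b, fst_pi (aadd a b) = fst_pi a + fst_pi b;
  fst_pi_scale : forall c a, fst_pi (ascale c a) = c *: fst_pi a;
  fst_pi_mul : forall a b, fst_pi (amul a b) = fst_pi a *m fst_pi b;
  fst_pi_star : forall a, fst_pi (astar a) = adjmx (fst_pi a);
  fst_pi_inj : injective fst_pi;
  (* J antilinear (built in) isometry with J^2 = 1 *)
  fst_J_isom : forall x : 'cV[C]_fst_N,
      adjmx (Jop fst_J x) *m Jop fst_J x = adjmx x *m x;
  fst_J_invol : forall x : 'cV[C]_fst_N, Jop fst_J (Jop fst_J x) = x;
  fst_pi0_add : forall a b, pi0_of fst_pi fst_J (aadd a b)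
      = pi0_of fst_pi fst_J a + pi0_of fst_pi fst_J b;
  fst_pi0_scale : forall c a, pi0_of fst_pi fst_J (ascale c a)
      = c *: pi0_of fst_pi fst_J a;
  fst_pi0_mul : forall a b, pi0_of fst_pi fst_J (amul a b)
      = pi0_of fst_pi fst_J b *m pi0_of fst_pi fst_J a;
  fst_pi0_comm : forall a b,
      pi0_of fst_pi fst_J a *m fst_pi b = fst_pi b *m pi0_of fst_pi fst_J a;
  fst_gamma_sa : adjmx fst_gamma = fst_gamma;
  fst_gamma_sq : fst_gamma *m fst_gamma = 1%:M;
  fst_gamma_J : forall x, Jop fst_J (fst_gamma *m x) = fst_gamma *m Jop fst_J x;
  fst_gamma_pi : forall a, fst_gamma *m fst_pi a = fst_pi a *m fst_gamma;
  fst_gamma_gen : exists s : seq (alg C n * alg C n),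
      fst_gamma = \sum_(p <- s) fst_pi p.1 *m pi0_of fst_pi fst_J p.2
}.

Section Forms.
Variables (C : numClosedFieldType) (k : nat) (n : 'I_k -> nat).
Variable S : fin_spectral_triple C n.
Let N := fst_N S.
Let pi := fst_pi S.
Let J := fst_J S.
Let g := fst_gamma S.
Definition pi0 := pi0_of pi J.

Definition is_dirac (D : 'M[C]_N) : Prop :=
  [/\ adjmx D = D,
      forall x, Jop J (D *m x) = D *m Jop J x,
      D *m g = - (g *m D) &
      forall a b, comm (comm D (pi a)) (pi0 b) = 0].

(* Universal forms, represented by finite formal sums of generators:    *)
(* a 1-form  sum a0 da1  is a list of pairs (a0,a1);                    *)
(* a 2-form  sum a0 da1 da2 is a list of triples ((a0,a1),a2).          *)
(* Sums are concatenations.                                             *)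
Definition uform1 := seq (alg C n * alg C n).
Definition uform2 := seq (alg C n * alg C n * alg C n).

Definition neg2 (w : uform2) : uform2 := [seq ((aopp p.1.1, p.1.2), p.2) | p <- w].

Definition d1 (w : uform1) : uform2 := [seq ((@aone C k n, p.1), p.2) | p <- w].

(* (a0 da1)(b0 db1) = a0 d(a1 b0) db1 - a0 a1 db0 db1 *)
Definition mul11 (u v : uform1) : uform2 :=
  flatten [seq [:: ((p.1, amul p.2 q.1), q.2); ((aopp (amul p.1 p.2), q.1), q.2)]
          | p <- u, q <- v].

Definition lmul2 (a : alg C n) (w : uform2) : uform2 :=
  [seq ((amul a p.1.1, p.1.2), p.2) | p <- w].

(* (a0 da1 da2) b = a0 da1 d(a2 b) - a0 d(a1 a2) db + a0 a1 da2 db *)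
Definition rmul2 (w : uform2) (b : alg C n) : uform2 :=
  flatten [seq [:: ((p.1.1, p.1.2), amul p.2 b);
                   ((aopp p.1.1, amul p.1.2 p.2), b);
                   ((amul p.1.1 p.1.2, p.2), b)] | p <- w].

Section WithD.
Variable D : 'M[C]_N.

Definition piD1 (w : uform1) : 'M[C]_N :=
  \sum_(p <- w) pi p.1 *m comm D (pi p.2).
Definition piD2 (w : uform2) : 'M[C]_N :=
  \sum_(p <- w) pi p.1.1 *m comm D (pi p.1.2) *m comm D (pi p.2).

(* Equality in Omega^2(A) = Omega^2_u / (ker pi^2 + d ker pi^1):        *)
(* u - v - d k1 lies in ker pi for some k1 in ker pi^1.                 *)
Definition eqOmega2 (u v : uform2) : Prop :=
  exists k1 : uform1, piD1 k1 = 0 /\ piD2 (u ++ neg2 (v ++ d1 k1)) = 0.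
End WithD.

Definition xi : uform1 :=
  [seq (@Pblk C k n p.1, @Pblk C k n p.2) |
     p <- [seq (i, j) | i <- enum 'I_k, j <- enum 'I_k] & p.1 != p.2].

Definition scale1 (c : C) (w : uform1) : uform1 := [seq (ascale c p.1, p.2) | p <- w].

Definition curvature (H : uform1) : uform2 := d1 H ++ mul11 H H.
End Forms.

(* Main.v *)
Require Import Defs.
From HB Require Import structures.
From mathcomp Require Import all_boot all_algebra.
From Stdlib Require Import FunctionalExtensionality.
From mathcomp Require Import ring.
Import GRing.Theory Num.Theory.
Local Open Scope ring_scope.

Section L.
Variables (C : numClosedFieldType) (k : nat) (n : 'I_k -> nat) (S : fin_spectral_triple C n).
Local Notation N := (fst_N S).
Local Notation pi := (fst_pi S).
Local Notation J := (fst_J S).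
Local Notation g := (fst_gamma S).
Local Notation P := (@Pblk C k n).
Local Notation A := (alg C n).

Definition azero : A := fun i => 0.

Definition pio : A -> 'M[C]_N := locked (pi0 S).
Lemma pioE a : pio a = pi0_of (fst_pi S) (fst_J S) a.
Proof. by rewrite /pio -lock. Qed.

Lemma alg_ext (a b : A) : (forall i, a i = b i) -> a = b.
Proof. exact: functional_extensionality_dep. Qed.

Lemma pi_zero : pi azero = 0.
Proof.
have -> : azero = ascale 0 azero by apply: alg_ext => i; rewrite /ascale scale0r.
by rewrite fst_pi_scale scale0r.
Qed.

Lemma pio_zero : pio azero = 0.
Proof.
have -> : azero = ascale 0 azero by apply: alg_ext => i; rewrite /ascale scale0r.
by rewrite pioE fst_pi0_scale scale0r.
Qed.

Lemma pi_opp a : pi (aopp a) = - pi a.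
Proof.
have -> : aopp a = ascale (-1) a by apply: alg_ext => i; rewrite /ascale /aopp scaleN1r.
by rewrite fst_pi_scale scaleN1r.
Qed.

Lemma pi_sum (I : Type) (r : seq I) (f : I -> A) :
  pi (fun i0 => \sum_(j <- r) f j i0) = \sum_(j <- r) pi (f j).
Proof.
elim: r => [|x r IH].
  rewrite big_nil -pi_zero; congr pi; apply: alg_ext => i; by rewrite big_nil.
rewrite big_cons -IH -fst_pi_add; congr pi; apply: alg_ext => i.
by rewrite big_cons.
Qed.

Lemma pio_sum (I : Type) (r : seq I) (f : I -> A) :
  pio (fun i0 => \sum_(j <- r) f j i0) = \sum_(j <- r) pio (f j).
Proof.
elim: r => [|x r IH].
  rewrite big_nil -pio_zero; congr pio; apply: alg_ext => i; by rewrite big_nil.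
rewrite big_cons -IH !pioE -fst_pi0_add; congr pi0_of; apply: alg_ext => i.
by rewrite big_cons.
Qed.

Lemma pi_one : pi (aone C n) = 1%:M.
Proof.
set e := pi (aone C n).
have He : forall a, e *m pi a = pi a.
  move=> a; rewrite /e -fst_pi_mul; congr pi; apply: alg_ext => i.
  by rewrite /amul /aone mul1mx.
have Hg : e *m g = g.
  case: (fst_gamma_gen S) => s ->.
  rewrite mulmx_sumr; apply: eq_bigr => p _; by rewrite mulmxA He.
by rewrite -(fst_gamma_sq S) -{1}Hg -mulmxA fst_gamma_sq mulmx1.
Qed.

Lemma amulP i j : amul (P i) (P j) = if i == j then P i else azero.
Proof.
apply: alg_ext => i0; rewrite /amul /Pblk /azero.
case: (i =P j) => [<-|nij].
  by case: (i0 == i); [rewrite mulmx1 | rewrite mul0mx].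
case: (i0 =P i) => [->|_]; last by rewrite mul0mx.
by have /eqP/negbTE -> := nij; rewrite mulmx0.
Qed.

Lemma pP i j : pi (P i) *m pi (P j) = if i == j then pi (P i) else 0.
Proof. by rewrite -fst_pi_mul amulP; case: (i == j); rewrite ?pi_zero. Qed.

Lemma pioP i j : pio (P i) *m pio (P j) = if i == j then pio (P i) else 0.
Proof.
rewrite !pioE -fst_pi0_mul amulP -!pioE.
case: (j =P i) => [->|nji]; first by rewrite eqxx.
have /negbTE -> : i != j by apply/eqP => e; apply: nji; rewrite e.
exact: pio_zero.
Qed.

Lemma conjmxK m p (M : 'M[C]_(m, p)) : Defs.conjmx (Defs.conjmx M) = M.
Proof. by apply/matrixP => i j; rewrite !mxE conjCK. Qed.

Lemma conjmxM m p q (M1 : 'M[C]_(m, p)) (M2 : 'M[C]_(p, q)) :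
  Defs.conjmx (M1 *m M2) = Defs.conjmx M1 *m Defs.conjmx M2.
Proof. rewrite /Defs.conjmx. exact: map_mxM. Qed.

Lemma mx_ext m (M1 M2 : 'M[C]_m) : (forall x : 'cV_m, M1 *m x = M2 *m x) -> M1 = M2.
Proof.
move=> H; apply/matrixP => i j.
have := H (delta_mx j 0); rewrite -!colE => /(congr1 (fun M : 'cV[C]_m => M i 0)).
by rewrite !mxE.
Qed.

Lemma JJ : J *m Defs.conjmx J = 1%:M.
Proof.
apply: mx_ext => x; rewrite mul1mx.
have := @fst_J_invol _ _ _ S x.
by rewrite /Jop conjmxM conjmxK mulmxA.
Qed.

Lemma pio_one : pio (aone C n) = 1%:M.
Proof.
rewrite pioE /pi0_of pi_one /Jconj /adjmx.
have E : Defs.conjmx (1%:M : 'M[C]_N) = 1%:M.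
  by apply/matrixP => i j; rewrite !mxE; case: (i == j); rewrite /= ?conjC1 ?conjC0.
by rewrite E trmx1 E mulmx1 JJ.
Qed.

Lemma sumP_alg : (fun i0 => \sum_(j < k) P j i0) = aone C n.
Proof.
apply: alg_ext => i0; rewrite /aone /Pblk (bigD1 i0) //= eqxx big1 ?addr0 //.
by move=> j /negbTE; rewrite eq_sym => ->.
Qed.

Lemma sumP : \sum_(i < k) pi (P i) = 1%:M.
Proof. by rewrite -pi_sum sumP_alg pi_one. Qed.

Lemma sumPo : \sum_(i < k) pio (P i) = 1%:M.
Proof. by rewrite -pio_sum sumP_alg pio_one. Qed.

Lemma pi_commP i a : pi (P i) *m pi a = pi a *m pi (P i).
Proof.
rewrite -!fst_pi_mul; congr pi; apply: alg_ext => i0; rewrite /amul /Pblk.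
by case: (i0 == i); rewrite ?mul1mx ?mulmx1 ?mul0mx ?mulmx0.
Qed.

Lemma GJ : J *m Defs.conjmx g = g *m J.
Proof.
apply: mx_ext => y.
have := @fst_gamma_J _ _ _ S (Defs.conjmx y).
by rewrite /Jop conjmxM conjmxK !mulmxA.
Qed.

Lemma GJc : Defs.conjmx J *m g = Defs.conjmx g *m Defs.conjmx J.
Proof. by have := congr1 (@Defs.conjmx C _ _) GJ; rewrite !conjmxM conjmxK. Qed.

Lemma g_pio a : g *m pio a = pio a *m g.
Proof.
rewrite pioE /pi0_of /Jconj -fst_pi_star.
set B := pi (astar a).
have gB : g *m B = B *m g by exact: fst_gamma_pi.
rewrite !mulmxA -GJ -(mulmxA J) -conjmxM gB conjmxM -!mulmxA GJc.
done.
Qed.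

Definition emb (i : 'I_k) (M : 'M[C]_(n i)) : A :=
  fun i0 => if i =P i0 is ReflectT e then castmx (congr1 n e, congr1 n e) M else 0.

Lemma emb_self i M : emb i M i = M.
Proof. by rewrite /emb; case: (i =P i) => // e; rewrite castmx_id. Qed.

Lemma emb_other i M i0 : i != i0 -> emb i M i0 = 0.
Proof. by rewrite /emb; case: (i =P i0). Qed.

Lemma emb_mul i M1 M2 : amul (emb i M1) (emb i M2) = emb i (M1 *m M2).
Proof.
apply: alg_ext => i0; rewrite /amul; case: (i =P i0) => [<-|/eqP ne].
  by rewrite !emb_self.
by rewrite !emb_other // mul0mx.
Qed.

Lemma emb_scale i c M : ascale c (emb i M) = emb i (c *: M).
Proof.
apply: alg_ext => i0; rewrite /ascale; case: (i =P i0) => [<-|/eqP ne].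
  by rewrite !emb_self.
by rewrite !emb_other // scaler0.
Qed.

Lemma emb_sum i (I : Type) (r : seq I) (F : I -> 'M[C]_(n i)) :
  (fun i0 => \sum_(j <- r) emb i (F j) i0) = emb i (\sum_(j <- r) F j).
Proof.
apply: alg_ext => i0; case: (i =P i0) => [<-|/eqP ne].
  by rewrite emb_self; apply: eq_bigr => j _; rewrite emb_self.
by rewrite emb_other // big1 // => j _; rewrite emb_other.
Qed.

Lemma emb_sand i M1 x M2 :
  amul (amul (emb i M1) x) (emb i M2) = emb i (M1 *m x i *m M2).
Proof.
apply: alg_ext => i0; rewrite /amul; case: (i =P i0) => [<-|/eqP ne].
  by rewrite !emb_self.
by rewrite !emb_other // !mul0mx.
Qed.

Lemma P_emb i : P i = emb i 1%:M.
Proof.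
apply: alg_ext => i0; rewrite /Pblk; case: (i =P i0) => [<-|/eqP ne].
  by rewrite emb_self eqxx.
by rewrite emb_other // eq_sym (negbTE ne).
Qed.

Lemma sum_delta m : \sum_(r < m) delta_mx r r = 1%:M :> 'M[C]_m.
Proof.
apply/matrixP => a b; rewrite summxE !mxE (bigD1 a) //= big1 => [|r nr].
  by rewrite mxE addr0 eqxx /= eq_sym.
by rewrite mxE eq_sym (negbTE nr).
Qed.

Lemma delta_sand m (o : 'I_m) (X : 'M[C]_m) :
  delta_mx o o *m X *m delta_mx o o = X o o *: delta_mx o o.
Proof.
apply/matrixP => a b; rewrite !mxE (bigD1 o) //= big1 => [|j nj].
  rewrite !mxE (bigD1 o) //= big1 => [|l nl].
    rewrite !mxE !eqxx andbT /= addr0.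
    case: (a == o); case: (b == o); rewrite /= ?mulr1 ?mul1r ?mulr0 ?mul0r ?addr0 //.
  by rewrite !mxE (negbTE nl) andbF mul0r.
by rewrite [delta_mx _ _ j b]mxE (negbTE nj) /= mulr0.
Qed.

Lemma rearr m (e f X Y : 'M[C]_m) : f *m X = X *m f -> Y *m e = e *m Y ->
  f *m e = e *m f -> e *m f *m X *m Y *m e *m f = (e *m X *m e) *m (f *m Y *m f).
Proof.
move=> fX Ye fe.
rewrite -(mulmxA e f X) fX mulmxA.
rewrite -(mulmxA (e *m X *m f) Y e) Ye mulmxA.
rewrite -(mulmxA (e *m X) f e) fe mulmxA.
by rewrite !mulmxA.
Qed.

Lemma rearr2 m (a b c d : 'M[C]_m) : b *m c = c *m b ->
  a *m b *m c *m d = (a *m c) *m (b *m d).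
Proof. by move=> bc; rewrite -(mulmxA a b c) bc !mulmxA. Qed.

Lemma pio_pi a b : pio a *m pi b = pi b *m pio a.
Proof. rewrite pioE; exact: fst_pi0_comm. Qed.

Lemma g_pi a : g *m pi a = pi a *m g.
Proof. exact: fst_gamma_pi. Qed.

Lemma pio_mul a b : pio (amul a b) = pio b *m pio a.
Proof. rewrite !pioE; exact: fst_pi0_mul. Qed.

Lemma pio_scale c a : pio (ascale c a) = c *: pio a.
Proof. rewrite !pioE; exact: fst_pi0_scale. Qed.

Variable hn : forall i, (0 < n i)%N.

Definition E (i : 'I_k) (r s : 'I_(n i)) : A := emb i (delta_mx r s).
Definition eu i r s := pi (E i r s).
Definition fu i r s := pio (E i s r).

Lemma e_mul i r s u : eu i r s *m eu i s u = eu i r u.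
Proof. by rewrite /eu -fst_pi_mul /E emb_mul mul_delta_mx. Qed.

Lemma f_mul i r s u : fu i r s *m fu i s u = fu i r u.
Proof. by rewrite /fu -pio_mul /E emb_mul mul_delta_mx. Qed.

Lemma sum_e i : \sum_(r < n i) eu i r r = pi (P i).
Proof. by rewrite /eu -pi_sum /E emb_sum sum_delta P_emb. Qed.

Lemma sum_f i : \sum_(r < n i) fu i r r = pio (P i).
Proof. by rewrite /fu -pio_sum /E emb_sum sum_delta P_emb. Qed.

Lemma e_sand i (o : 'I_(n i)) x : eu i o o *m pi x *m eu i o o = x i o o *: eu i o o.
Proof.
by rewrite /eu -!fst_pi_mul /E emb_sand delta_sand -emb_scale fst_pi_scale.
Qed.

Lemma f_sand i (o : 'I_(n i)) y : fu i o o *m pio y *m fu i o o = y i o o *: fu i o o.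
Proof.
rewrite /fu -!pio_mul.
have -> : amul (E i o o) (amul y (E i o o)) = amul (amul (E i o o) y) (E i o o).
  by apply: alg_ext => i0; rewrite /amul mulmxA.
by rewrite /E emb_sand delta_sand -emb_scale pio_scale.
Qed.

Lemma g_eu i r s : g *m eu i r s = eu i r s *m g.
Proof. exact: g_pi. Qed.
Lemma g_fu i r s : g *m fu i r s = fu i r s *m g.
Proof. exact: g_pio. Qed.
Lemma fe i j r s t u : fu j t u *m eu i r s = eu i r s *m fu j t u.
Proof. exact: pio_pi. Qed.

Lemma block_gen m (G : 'M[C]_m) (I1 I2 : finType) (e : I1 -> I1 -> 'M[C]_m)
  (f : I2 -> I2 -> 'M[C]_m) (o : I1) (o' : I2) (T : Type) (s : seq T)
  (X Y : T -> 'M[C]_m) (a b : T -> C) :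
  (forall r s u, e r s *m e s u = e r u) -> (forall r s u, f r s *m f s u = f r u) ->
  (forall r s t u, f t u *m e r s = e r s *m f t u) ->
  (forall r s, G *m e r s = e r s *m G) -> (forall r s, G *m f r s = f r s *m G) ->
  G = \sum_(p <- s) X p *m Y p ->
  (forall p, f o' o' *m X p = X p *m f o' o') ->
  (forall p, Y p *m e o o = e o o *m Y p) ->
  (forall p, e o o *m X p *m e o o = a p *: e o o) ->
  (forall p, f o' o' *m Y p *m f o' o' = b p *: f o' o') ->
  G *m ((\sum_r e r r) *m (\sum_t f t t)) =
    (\sum_(p <- s) a p * b p) *: ((\sum_r e r r) *m (\sum_t f t t)).
Proof.
move=> emul fmul fe ge gf Hs fX Ye eX fY.
set Z := e o o *m f o' o'.
have ZZ : Z *m Z = Z by rewrite /Z !mulmxA rearr2 ?fe // emul fmul.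
have gZ : G *m Z = Z *m G by rewrite /Z mulmxA ge -mulmxA gf mulmxA.
have gZc : G *m Z = (\sum_(p <- s) a p * b p) *: Z.
  rewrite -{1}ZZ mulmxA gZ -mulmxA Hs mulmx_suml mulmx_sumr.
  rewrite scaler_suml; apply: eq_bigr => p _.
  rewrite /Z !mulmxA rearr ?fX ?Ye ?fe //.
  by rewrite eX -scalemxAl -!mulmxA (mulmxA (f o' o')) fY !scalemxAr scalerA.
rewrite mulmx_suml mulmx_sumr scaler_sumr; apply: eq_bigr => r _.
rewrite mulmx_sumr mulmx_sumr scaler_sumr; apply: eq_bigr => t _.
set L := e r o *m f t o'.
set R := e o r *m f o' t.
have LZ : L *m Z = L by rewrite /L /Z !mulmxA rearr2 ?fe // emul fmul.
have LR : L *m R = e r r *m f t t by rewrite /L /R !mulmxA rearr2 ?fe // emul fmul.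
have gL : G *m L = L *m G by rewrite /L mulmxA ge -mulmxA gf mulmxA.
rewrite -LR -{1}LZ mulmxA mulmxA gL -(mulmxA L G) gZc -scalemxAr.
by rewrite LZ -scalemxAl.
Qed.

Lemma gamma_block i j : exists c, g *m (pi (P i) *m pio (P j)) = c *: (pi (P i) *m pio (P j)).
Proof.
set o := Ordinal (hn i); set o' := Ordinal (hn j).
case: (fst_gamma_gen S) => s Hs.
exists (\sum_(p <- s) (p.1 i o o * p.2 j o' o')).
rewrite -sum_e -sum_f.
apply: (@block_gen _ g _ _ (eu i) (fu j) o o' _ s (fun p => pi p.1) (fun p => pio p.2)
  (fun p => p.1 i o o) (fun p => p.2 j o' o')).
- exact: e_mul.
- exact: f_mul.
- move=> *; exact: fe.
- move=> *; exact: g_eu.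
- move=> *; exact: g_fu.
- by rewrite {1}Hs; apply: eq_bigr => p _; rewrite pioE.
- move=> p; exact: pio_pi.
- move=> p; exact: pio_pi.
- move=> p; exact: e_sand.
- move=> p; exact: f_sand.
Qed.

Lemma x_eqN_0 m (X : 'M[C]_m) : X = - X -> X = 0.
Proof.
move=> h; have : (2%:R : C) *: X = 0 by rewrite scaler_nat mulr2n {1}h addNr.
by move/eqP; rewrite scalemx_eq0 pnatr_eq0 /= => /eqP.
Qed.

Lemma qq i j : (pi (P i) *m pio (P j)) *m (pi (P i) *m pio (P j)) = pi (P i) *m pio (P j).
Proof. by rewrite !mulmxA rearr2 ?pio_pi // pP pioP !eqxx. Qed.

Lemma g_q i j : g *m (pi (P i) *m pio (P j)) = (pi (P i) *m pio (P j)) *m g.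
Proof. by rewrite mulmxA g_pi -mulmxA g_pio mulmxA. Qed.

Variable D : 'M[C]_N.
Hypothesis hD : @is_dirac C k n S D.

Lemma qDq_zero i j : let q := pi (P i) *m pio (P j) in q *m D *m q = 0.
Proof.
move=> q; case: (gamma_block i j) => c gq.
rewrite -/q in gq.
have Dg : D *m g = - (g *m D) by case: hD.
have gqq : g *m q = q *m g by exact: g_q.
have qq' : q *m q = q by exact: qq.
clearbody q.
have h1 : q *m D *m q *m g = c *: (q *m D *m q).
  by rewrite -mulmxA -gqq gq scalemxAr.
have h2 : q *m D *m q *m g = - (c *: (q *m D *m q)).
  rewrite -mulmxA -gqq mulmxA -(mulmxA q D g) Dg mulmxN mulNmx mulmxA -gqq gq.
  by rewrite !scalemxAl.
have cY : c *: (q *m D *m q) = 0 by apply: x_eqN_0; rewrite -{1}h1 h2.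
have qc : q = (c * c) *: q.
  by rewrite -scalerA -gq scalemxAr -gq mulmxA (fst_gamma_sq S) mul1mx.
have -> : q *m D *m q = (c * c) *: (q *m D *m q).
  by rewrite {1}qc -!scalemxAl.
by rewrite -scalerA cY scaler0.
Qed.

Lemma abs_Dd m (p x Dm : 'M[C]_m) (qs : 'I_k -> 'M[C]_m) :
  p *m x = x *m p -> (forall l, qs l *m p = p *m qs l) -> (forall l, qs l *m x = x *m qs l) ->
  \sum_l qs l = 1%:M -> (forall l, qs l *m qs l = qs l) ->
  (forall l, comm Dm x *m qs l = qs l *m comm Dm x) ->
  (forall l, (p *m qs l) *m Dm *m (p *m qs l) = 0) ->
  p *m Dm *m p *m x - x *m (p *m Dm *m p) = 0.
Proof.
move=> px qp qx qsum qq2 cq Y0.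
have -> : p *m Dm *m p *m x - x *m (p *m Dm *m p) = p *m comm Dm x *m p.
  rewrite /comm mulmxBr mulmxBl !mulmxA -(mulmxA (p *m Dm) p x) px mulmxA -px.
  done.
set M := p *m comm Dm x *m p.
have Mq l : M *m qs l = qs l *m M.
  by rewrite /M -mulmxA -qp mulmxA -(mulmxA p) cq !mulmxA qp.
rewrite -[M]mulmx1 -qsum mulmx_sumr; apply: big1 => l _.
rewrite -qq2 mulmxA Mq /M.
set Q := p *m qs l.
have Qx : Q *m x = x *m Q by rewrite /Q -mulmxA qx !mulmxA px.
have -> : qs l *m (p *m comm Dm x *m p) *m qs l = Q *m comm Dm x *m Q.
  by rewrite /Q !mulmxA qp.
have YQ : Q *m Dm *m Q = 0 by exact: Y0.
clearbody Q.
rewrite /comm mulmxBr mulmxBl !mulmxA -(mulmxA (Q *m Dm) x Q) -Qx mulmxA YQ mul0mx.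
by rewrite Qx -(mulmxA x Q Dm) -(mulmxA x (Q *m Dm)) YQ mulmx0 subrr.
Qed.

Lemma subACA (V : zmodType) (x y z t : V) : (x - y) - (z - t) = (x - z) - (y - t).
Proof. by rewrite !opprD !opprK addrACA. Qed.

Lemma comm_subl m (X Y Z : 'M[C]_m) : comm (X - Y) Z = comm X Z - comm Y Z.
Proof. by rewrite /comm mulmxBl mulmxBr subACA. Qed.

Definition Dd := \sum_(i < k) pi (P i) *m D *m pi (P i).

Lemma order_one a l : comm D (pi a) *m pio (P l) = pio (P l) *m comm D (pi a).
Proof.
case: hD => _ _ _ Ord; have := Ord a (P l).
by rewrite /comm /pi0 -pioE => /subr0_eq.
Qed.

Lemma Dd_comm a : comm Dd (pi a) = 0.
Proof.
rewrite /comm /Dd mulmx_suml mulmx_sumr -sumrB; apply: big1 => i _.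
apply: (@abs_Dd _ _ _ _ (fun l => pio (P l))).
- exact: pi_commP.
- move=> l; exact: pio_pi.
- move=> l; exact: pio_pi.
- exact: sumPo.
- by move=> l; rewrite pioP eqxx.
- move=> l; exact: order_one.
- move=> l; exact: qDq_zero.
Qed.

Lemma delta_xh a : comm D (pi a) = comm (D - Dd) (pi a).
Proof. by rewrite comm_subl Dd_comm subr0. Qed.

Local Notation dl a := (comm D (pi a)).

Lemma leib a b : dl (amul a b) = dl a *m pi b + pi a *m dl b.
Proof. by rewrite fst_pi_mul /comm mulmxBl mulmxBr !mulmxA addrA subrK. Qed.

Lemma dl_opp a : dl (aopp a) = - dl a.
Proof. by rewrite pi_opp /comm mulmxN mulNmx opprK opprB addrC. Qed.

Lemma dl_scale c a : dl (ascale c a) = c *: dl a.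
Proof. by rewrite fst_pi_scale /comm -scalemxAl -scalemxAr scalerBr. Qed.

Lemma dl_one : dl (aone C n) = 0.
Proof. by rewrite pi_one /comm mulmx1 mul1mx subrr. Qed.

Lemma piD1_nil : piD1 D [::] = 0.
Proof. by rewrite /piD1 big_nil. Qed.

Lemma piD1_cat u v : piD1 D (u ++ v) = piD1 D u + piD1 D v.
Proof. by rewrite /piD1 big_cat. Qed.

Lemma piD2_cat u v : piD2 D (u ++ v) = piD2 D u + piD2 D v.
Proof. by rewrite /piD2 big_cat. Qed.

Lemma piD2_neg2 w : piD2 D (neg2 w) = - piD2 D w.
Proof.
rewrite /piD2 /neg2 big_map -sumrN; apply: eq_bigr => p _.
by rewrite pi_opp !mulNmx.
Qed.

Lemma piD2_d1 w : piD2 D (d1 w) = \sum_(p <- w) dl p.1 *m dl p.2.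
Proof.
by rewrite /piD2 /d1 big_map; apply: eq_bigr => p _; rewrite /= pi_one mul1mx.
Qed.

Lemma piD2_mul11 u v : piD2 D (mul11 u v) = piD1 D u *m piD1 D v.
Proof.
rewrite /piD2 /mul11 big_flatten /= big_allpairs_dep /piD1 mulmx_suml.
apply: eq_bigr => p _; rewrite mulmx_sumr; apply: eq_bigr => q _.
rewrite big_cons big_cons big_nil addr0 /= leib pi_opp fst_pi_mul.
rewrite mulmxDr mulmxDl !mulmxA mulNmx mulNmx addrK.
done.
Qed.

Lemma piD2_lmul2 a w : piD2 D (lmul2 a w) = pi a *m piD2 D w.
Proof.
rewrite /piD2 /lmul2 big_map mulmx_sumr; apply: eq_bigr => p _.
by rewrite /= fst_pi_mul !mulmxA.
Qed.

Lemma piD2_rmul2 w b : piD2 D (rmul2 w b) = piD2 D w *m pi b.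
Proof.
rewrite /piD2 /rmul2 big_flatten /= big_map mulmx_suml; apply: eq_bigr => p _.
rewrite big_cons big_cons big_cons big_nil addr0 /= !leib pi_opp fst_pi_mul.
by rewrite [comm]lock !mulmxDr !mulmxDl !mulmxA !mulNmx subrK addrK.
Qed.

Lemma piD1_scale1 c w : piD1 D (scale1 c w) = c *: piD1 D w.
Proof.
rewrite /piD1 /scale1 big_map scaler_sumr; apply: eq_bigr => p _.
by rewrite /= fst_pi_scale scalemxAl.
Qed.

Lemma piD2_d1_scale1 c w : piD2 D (d1 (scale1 c w)) = c *: piD2 D (d1 w).
Proof.
rewrite !piD2_d1 /scale1 big_map scaler_sumr; apply: eq_bigr => p _.
by rewrite /= dl_scale scalemxAl.
Qed.

Lemma sum_xi (F : A * A -> 'M[C]_N) :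
  \sum_(q <- xi C n) F q = \sum_(i < k) \sum_(j < k) (if i != j then F (P i, P j) else 0).
Proof.
rewrite /xi big_map big_filter big_mkcond big_allpairs /= big_enum /=.
by apply: eq_bigr => i _; rewrite big_enum /=.
Qed.

Lemma offdiag m (F : 'I_k -> 'I_k -> 'M[C]_m) :
  \sum_(i < k) \sum_(j < k) (if i != j then F i j else 0) =
  \sum_(i < k) \sum_(j < k) F i j - \sum_(i < k) F i i.
Proof.
rewrite -sumrB; apply: eq_bigr => i _.
rewrite [in RHS](bigD1 i) //= (bigD1 i) //= eqxx add0r [F i i + _]addrC addrK.
by apply: eq_bigr => j; rewrite eq_sym => ->.
Qed.

Lemma comm_sumr m (X : 'M[C]_m) (Y : 'I_k -> 'M[C]_m) :
  \sum_(j < k) comm X (Y j) = comm X (\sum_(j < k) Y j).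
Proof. by rewrite /comm mulmx_sumr mulmx_suml sumrB. Qed.

Lemma comm1 m (X : 'M[C]_m) : comm X 1%:M = 0.
Proof. by rewrite /comm mulmx1 mul1mx subrr. Qed.

Lemma sum_pp : \sum_(q <- xi C n) pi q.1 *m pi q.2 = 0.
Proof.
rewrite (sum_xi (fun q => pi q.1 *m pi q.2)) offdiag /=.
have -> : \sum_(i < k) \sum_(j < k) pi (P i) *m pi (P j) = 1%:M.
  by rewrite -[RHS]mulmx1 -{1}sumP mulmx_suml; apply: eq_bigr => i _; rewrite -sumP mulmx_sumr.
have -> : \sum_(i < k) pi (P i) *m pi (P i) = 1%:M.
  by rewrite -sumP; apply: eq_bigr => i _; rewrite pP eqxx.
by rewrite subrr.
Qed.

Lemma xh_eq : piD1 D (xi C n) = D - Dd.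
Proof.
rewrite /piD1 (sum_xi (fun q => pi q.1 *m comm D (pi q.2))) offdiag /=.
have -> : \sum_(i < k) \sum_(j < k) pi (P i) *m comm D (pi (P j)) = 0.
  apply: big1 => i _; rewrite -mulmx_sumr comm_sumr sumP comm1; exact: mulmx0.
have -> : \sum_(i < k) pi (P i) *m comm D (pi (P i)) = Dd - D.
  rewrite /Dd -{3}[D]mul1mx -sumP mulmx_suml -sumrB; apply: eq_bigr => i _.
  by rewrite /comm mulmxBr !mulmxA pP eqxx.
by rewrite sub0r opprB.
Qed.

Lemma sum_dp : \sum_(q <- xi C n) comm D (pi q.1) *m pi q.2 = - (D - Dd).
Proof.
rewrite (sum_xi (fun q => comm D (pi q.1) *m pi q.2)) offdiag /=.
have -> : \sum_(i < k) \sum_(j < k) comm D (pi (P i)) *m pi (P j) = 0.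
  by rewrite -[LHS]/(\sum_(i < k) \sum_(j < k) comm D (pi (P i)) *m pi (P j)); 
   under eq_bigr => i _ do rewrite -mulmx_sumr sumP mulmx1;
   rewrite comm_sumr sumP comm1.
have -> : \sum_(i < k) comm D (pi (P i)) *m pi (P i) = D - Dd.
  have DE : D = D *m \sum_(i < k) pi (P i) by rewrite sumP mulmx1.
  apply/esym; rewrite {1}DE /Dd mulmx_sumr -sumrB; apply: eq_bigr => i _.
  by rewrite /comm mulmxBl -!mulmxA pP eqxx.
by rewrite sub0r.
Qed.

Lemma pxp i : pi (P i) *m (D - Dd) *m pi (P i) = 0.
Proof.
have E1 : pi (P i) *m Dd *m pi (P i) = pi (P i) *m D *m pi (P i).
  rewrite /Dd mulmx_sumr mulmx_suml (bigD1 i) //= big1 ?addr0 => [|j nj].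
    by rewrite !mulmxA pP eqxx -mulmxA pP eqxx.
  by rewrite !mulmxA pP eq_sym (negbTE nj) !mul0mx.
by rewrite mulmxBr mulmxBl E1 subrr.
Qed.

Lemma comm_sq m (x p : 'M[C]_m) : p *m p = p -> p *m x *m p = 0 ->
  comm x p *m comm x p = - (x *m p *m x) - p *m (x *m x) *m p.
Proof.
move=> pp pxp0.
rewrite /comm mulmxBr !mulmxBl !mulmxA.
have -> : x *m p *m x *m p = 0.
  have E : x *m p *m x *m p = x *m (p *m x *m p) by rewrite !mulmxA.
  by rewrite E pxp0 mulmx0.
have -> : p *m x *m p *m x = 0 by rewrite pxp0 mul0mx.
by rewrite -(mulmxA x p p) pp subr0 sub0r addrC.
Qed.

Lemma S2_eq : \sum_(q <- xi C n) dl q.1 *m dl q.2 =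
  (D - Dd) *m (D - Dd) + \sum_(i < k) pi (P i) *m ((D - Dd) *m (D - Dd)) *m pi (P i).
Proof.
rewrite (sum_xi (fun q => dl q.1 *m dl q.2)) /=.
under eq_bigr => i _ do under eq_bigr => j _ do rewrite !delta_xh.
rewrite offdiag.
have pxp' := pxp.
set x := D - Dd.
have -> : \sum_(i < k) \sum_(j < k) comm x (pi (P i)) *m comm x (pi (P j)) = 0.
  apply: big1 => i _; rewrite -mulmx_sumr comm_sumr sumP comm1; exact: mulmx0.
have cs : forall i, comm x (pi (P i)) *m comm x (pi (P i)) =
    - (x *m pi (P i) *m x) - pi (P i) *m (x *m x) *m pi (P i).
  by move=> i; apply: comm_sq; [rewrite pP eqxx | exact: pxp'].
rewrite sub0r (eq_bigr _ (fun i _ => cs i)) sumrB sumrN opprB opprK addrC.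
congr (_ + _).
by rewrite -(mulmx_suml x) -mulmx_sumr sumP mulmx1.
Qed.

Definition lmul1 (a : A) (w : uform1 C n) : uform1 C n := [seq (amul a q.1, q.2) | q <- w].
Definition T0 (a : A) : uform1 C n :=
  [seq (q.1, amul q.2 a) | q <- xi C n] ++ [seq (aopp (amul a q.1), q.2) | q <- xi C n]
  ++ [:: (aopp (aone C n), a)].

Lemma piD1_lmul1 a w : piD1 D (lmul1 a w) = pi a *m piD1 D w.
Proof.
rewrite /piD1 /lmul1 big_map mulmx_sumr; apply: eq_bigr => q _.
by rewrite /= fst_pi_mul mulmxA.
Qed.

Lemma piD2_d1_lmul1 a w :
  piD2 D (d1 (lmul1 a w)) = dl a *m piD1 D w + pi a *m piD2 D (d1 w).
Proof.
rewrite !piD2_d1 /lmul1 big_map /piD1 mulmx_sumr mulmx_sumr -big_split /=.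
apply: eq_bigr => q _; rewrite leib mulmxDl !mulmxA.
done.
Qed.

Local Notation x := (D - Dd).

Lemma sum_pdl : \sum_(q <- xi C n) pi q.1 *m dl q.2 = x.
Proof. by rewrite -xh_eq. Qed.

Lemma piD1_T0 a : piD1 D (T0 a) = 0.
Proof.
rewrite /T0 !piD1_cat /piD1 [xi C n]lock !big_map big_cons big_nil addr0 -lock /=.
under eq_bigr => q _ do rewrite leib mulmxDr !mulmxA.
rewrite big_split /= -!mulmx_suml sum_pp mul0mx addr0 sum_pdl.
under eq_bigr => q _ do rewrite pi_opp fst_pi_mul mulNmx -mulmxA.
rewrite sumrN -mulmx_sumr sum_pdl pi_opp pi_one mulNmx mul1mx delta_xh /comm.
by rewrite opprB addKr subrr.
Qed.

Lemma zid1 (V : zmodType) (a b c : V) :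
  (a + a) + - (a - b) - ((b - c) + (c + c)) = a - c.
Proof.
rewrite opprB addrACA subrr addr0 (addrA (b - c)) subrK opprD addrA addrK.
done.
Qed.

Lemma alg3 m (X Y : 'M[C]_m) :
  (X *m X + X *m X) *m Y + - X *m (X *m Y - Y *m X)
  - ((X *m Y - Y *m X) *m X + Y *m (X *m X + X *m X)) = X *m X *m Y - Y *m X *m X.
Proof.
rewrite mulNmx !mulmxDl !mulmxDr ?mulmxBl ?mulmxBr ?mulNmx ?mulmxN !mulmxA.
exact: zid1.
Qed.

Hypothesis Hyp : x *m x = \sum_(i < k) pi (P i) *m (x *m x) *m pi (P i).

Lemma S2_hyp : \sum_(q <- xi C n) dl q.1 *m dl q.2 = x *m x + x *m x.
Proof. by rewrite S2_eq -Hyp. Qed.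

Lemma piD2_dT0 a : piD2 D (d1 (T0 a)) = x *m x *m pi a - pi a *m x *m x.
Proof.
rewrite piD2_d1 /T0 !big_cat [xi C n]lock !big_map big_cons big_nil /= addr0 -lock.
under eq_bigr => q _ do rewrite leib mulmxDr !mulmxA.
rewrite big_split /= -!mulmx_suml S2_hyp sum_dp.
under eq_bigr => q _ do rewrite dl_opp leib mulNmx mulmxDl -!mulmxA.
rewrite sumrN big_split /= -!mulmx_sumr sum_pdl S2_hyp dl_opp dl_one oppr0 mul0mx addr0 delta_xh /comm.
exact: alg3.
Qed.

Lemma piD1_flatten (l : seq (uform1 C n)) : piD1 D (flatten l) = \sum_(u <- l) piD1 D u.
Proof. by rewrite /piD1 big_flatten. Qed.

Lemma piD2_flatten (l : seq (uform2 C n)) : piD2 D (flatten l) = \sum_(u <- l) piD2 D u.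
Proof. by rewrite /piD2 big_flatten. Qed.

Lemma piD2_d1_flatten (l : seq (uform1 C n)) :
  piD2 D (d1 (flatten l)) = \sum_(u <- l) piD2 D (d1 u).
Proof.
rewrite piD2_d1 big_flatten; apply: eq_bigr => u _; by rewrite piD2_d1.
Qed.

Lemma zid2 (V : zmodType) (a b c d e : V) :
  a - b - (c - d) - ((a - b) + (d - e) + (- c - - e)) = 0.
Proof. by rewrite opprK -(addrA (a - b) (d - e)) (addrACA d) addNr addr0 opprB subrr. Qed.

Lemma alg4 m (X A' B : 'M[C]_m) :
  (X *m A' - A' *m X) *m (X *m B - B *m X) -
  (X *m (A' *m (X *m B - B *m X)) + A' *m (X *m B - B *m X) *m X +
   - A' *m (X *m X *m B - B *m X *m X)) = 0.
Proof.
rewrite ?mulmxBl ?mulmxBr ?mulmxBl ?mulNmx ?mulmxBr ?mulmxBl ?mulmxA.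
exact: zid2.
Qed.

Lemma part3 (w : uform1 C n) :
  @eqOmega2 C k n S D (d1 w) (mul11 (xi C n) w ++ mul11 w (xi C n)).
Proof.
exists (flatten [seq lmul1 (aopp p.1) (T0 p.2) | p <- w]); split.
  rewrite piD1_flatten big_map; apply: big1 => p _.
  by rewrite piD1_lmul1 piD1_T0 mulmx0.
rewrite piD2_cat piD2_neg2 !piD2_cat !piD2_mul11 piD2_d1_flatten big_map xh_eq.
under eq_bigr => p _ do rewrite piD2_d1_lmul1 piD1_T0 piD2_dT0 mulmx0 add0r.
rewrite piD2_d1 /piD1 mulmx_sumr mulmx_suml -!big_split -sumrB; apply: big1 => p _ /=.
rewrite !delta_xh /comm pi_opp.
exact: alg4.
Qed.

Lemma part1 : @eqOmega2 C k n S D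
  (flatten [seq rmul2 (lmul2 (P i) (mul11 (xi C n) (xi C n))) (P i) | i <- enum 'I_k])
  (mul11 (xi C n) (xi C n)).
Proof.
exists [::]; split; first exact: piD1_nil.
rewrite piD2_cat piD2_neg2 [d1 [::]]/= cats0 piD2_flatten big_map big_enum /=.
under eq_bigr => i _ do rewrite piD2_rmul2 piD2_lmul2 piD2_mul11 xh_eq.
rewrite piD2_mul11 xh_eq {2}Hyp subrr.
done.
Qed.

Lemma part2 : @eqOmega2 C k n S D (d1 (xi C n)) (mul11 (xi C n) (xi C n) ++ mul11 (xi C n) (xi C n)).
Proof.
exists [::]; split; first exact: piD1_nil.
by rewrite piD2_cat piD2_neg2 [d1 [::]]/= cats0 piD2_cat piD2_mul11 xh_eq piD2_d1 S2_hyp subrr.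
Qed.

Lemma part4 : @eqOmega2 C k n S D (curvature (scale1 (-2) (xi C n))) [::].
Proof.
exists [::]; split; first exact: piD1_nil.
rewrite /curvature piD2_cat piD2_neg2 [d1 [::]]/= piD2_cat piD2_d1_scale1 piD2_mul11.
rewrite piD1_scale1 piD2_d1 S2_hyp xh_eq [[::] ++ [::]]/= /piD2 big_nil subr0.
rewrite -scalemxAl -scalemxAr scalerA scalerDr -!scalerDl.
have -> : (-2 + -2 + -2 * -2 : C) = 0 by ring.
by rewrite scale0r.
Qed.

End L.


Theorem lemma10 (C : numClosedFieldType) (k : nat) (n : 'I_k -> nat)
  (hn : forall i, (0 < n i)%N)
  (S : fin_spectral_triple C n) (D : 'M[C]_(fst_N S))
  (hD : @is_dirac C k n S D) :
  let xi := xi C n in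
  let P := @Pblk C k n in
  let xih := @piD1 C k n S D xi in
  xih *m xih = \sum_(i < k) fst_pi S (P i) *m (xih *m xih) *m fst_pi S (P i) ->
  [/\ @eqOmega2 C k n S D
        (flatten [seq rmul2 (lmul2 (P i) (mul11 xi xi)) (P i) | i <- enum 'I_k])
        (mul11 xi xi),
      @eqOmega2 C k n S D (d1 xi) (mul11 xi xi ++ mul11 xi xi),
      (forall w : uform1 C n,
         @eqOmega2 C k n S D (d1 w) (mul11 xi w ++ mul11 w xi)) &
      @eqOmega2 C k n S D (curvature (scale1 (-2) xi)) [::]].
Proof.
move=> xi0 P0 xih H.
have Hyp : (D - Dd C k n S D) *m (D - Dd C k n S D) =
   \sum_(i < k) fst_pi S (Pblk C n i) *m ((D - Dd C k n S D) *m (D - Dd C k n S D))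
     *m fst_pi S (Pblk C n i).
  by rewrite -(xh_eq C k n S D).
split.
- by apply: part1.
- by apply: part2.
- move=> w; by apply: part3.
- by apply: part4.
Qed.
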